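(* Consider the GIP model with threshold-type bounds with uniform thresholds $\theta_l,\theta_h$ and $l_{j,0}=1$ for all $v_j\in V$, where $\theta_l>0$, and $h_{j,0}\ge 1$ and $\theta_h h_{j,0}>\theta_l$ for every $j$. Consider the MLT model on the same network with parameters $l'_j=\theta_l\alpha$, $h'_j=\theta_h\alpha h_{j,0}$, $m_j=\theta_h h_{j,0}/\theta_l$ (so $h'_{j,0}=h_{j,0}$). Let $\mathbf x(0)$ be an admissible GIP initial state and let the MLT model start from $\mathbf x'(0)=\mathbf x(0)$. Then $$x_j(t)=(\theta_l\alpha)^t\,x'_j(t)\qquad\text{for all }t\ge 0,\ v_j\in V.$$ Consequently, for $\gamma\in[0,1)$ and $\gamma'=1-(1-\gamma)\theta_l\alpha$, one has $(1-\gamma)^t x_j(t)=(1-\gamma')^t x'_j(t)$ for every $t\ge0$ and $j$, so that the overall influences $\sum_{t\ge1}(1-\gamma)^t x_j(t)$ and $\sum_{t\ge1}(1-\gamma')^t x'_j(t)$ coincide (whenever either converges).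
   Context: Let $G=(V,E)$ be a directed weighted network with node set $V=\{v_1,\dots,v_n\}$ and weighted adjacency matrix $\mathbf W=(W_{ij})$, where $W_{ij}>0$ if $(v_i,v_j)\in E$ and $W_{ij}=0$ otherwise; let $\alpha=\sum_{(v_i,v_j)\in E}W_{ij}/|E|$ be the mean edge weight. The general information propagation (GIP) model with lower bounds $\{l_{j,t}\}$ and upper bounds $\{h_{j,t}\}$ (real numbers with $0\le l_{j,t}\le h_{j,t}$, $l_{j,0}>0$) is the dynamics $x_j(t)=f_{j,t}(\sum_i W_{ij}x_i(t-1))$ for $t>0$, where $f_{j,t}(x)=0$ if $x<l_{j,t}$, $f_{j,t}(x)=x$ if $l_{j,t}\le x<h_{j,t}$, $f_{j,t}(x)=h_{j,t}$ if $x\ge h_{j,t}$; an initial state is admissible if $x_j(0)\in\{0\}\cup[l_{j,0},h_{j,0}]$ for all $j$. Threshold-type bounds with uniform thresholds $\theta_l,\theta_h$ are: for all $t>0$, $v_j\in V$, $l_{j,t}=(\theta_l\alpha)^t l_{j,0}$ and $h_{j,t}=\theta_h\theta_l^{t-1}\alpha^t h_{j,0}$. The multi-valued linear threshold (MLT) model with parameters $l'_j<h'_j$, $m_j$ is the dynamics $x'_j(t)=g_j(\sum_i W_{ij}x'_i(t-1))$ for $t>0$, where $g_j(y)=0$ if $y<l'_j$, $g_j(y)=\frac{m_j-1}{h'_j-l'_j}(y-l'_j)+1$ if $l'_j\le y<h'_j$, and $g_j(y)=m_j$ if $y\ge h'_j$, with initial values $x'_j(0)\in\{0\}\cup[1,h'_{j,0}]$.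 *)

(* Defs.v *)
From HB Require Import structures.
From mathcomp Require Import all_boot all_order all_algebra.
From mathcomp Require Import all_classical all_reals all_analysis.
Set Implicit Arguments. Unset Strict Implicit. Unset Printing Implicit Defensive.
Import Order.TTheory GRing.Theory Num.Theory.
Local Open Scope ring_scope.

Section Defs.
Variable R : realType.
Variable n : nat.

Definition edge_set (W : 'M[R]_n) : {set 'I_n * 'I_n} :=
  [set p | 0 < W p.1 p.2].

Definition mean_weight (W : 'M[R]_n) : R :=
  (\sum_(p in edge_set W) W p.1 p.2) / (#|edge_set W|)%:R.

Definition in_sum (W : 'M[R]_n) (x : 'I_n -> R) (j : 'I_n) : R :=
  \sum_(i < n) W i j * x i.

Definition gip_f (l h x : R) : R :=
  if x < l then 0 else if x < h then x else h.

Fixpoint gip_state (W : 'M[R]_n) (l h : nat -> 'I_n -> R) (x0 : 'I_n -> R)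
  (t : nat) : 'I_n -> R :=
  match t with
  | 0 => x0
  | t'.+1 => fun j => gip_f (l t j) (h t j) (in_sum W (gip_state W l h x0 t') j)
  end.

Definition gip_admissible (l h : nat -> 'I_n -> R) (x0 : 'I_n -> R) : Prop :=
  forall j, x0 j = 0 \/ (l 0%N j <= x0 j /\ x0 j <= h 0%N j).

Definition thr_low (W : 'M[R]_n) (thl : R) (l0 : 'I_n -> R) (t : nat) (j : 'I_n) : R :=
  (thl * mean_weight W) ^+ t * l0 j.

Definition thr_high (W : 'M[R]_n) (thl thh : R) (h0 : 'I_n -> R) (t : nat) (j : 'I_n) : R :=
  match t with
  | 0 => h0 j
  | t'.+1 => thh * thl ^+ t' * (mean_weight W) ^+ t * h0 j
  end.

Definition mlt_g (l' h' m y : R) : R :=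
  if y < l' then 0
  else if y < h' then (m - 1) / (h' - l') * (y - l') + 1
  else m.

Fixpoint mlt_state (W : 'M[R]_n) (l' h' m : 'I_n -> R) (x0 : 'I_n -> R)
  (t : nat) : 'I_n -> R :=
  match t with
  | 0 => x0
  | t'.+1 => fun j => mlt_g (l' j) (h' j) (m j) (in_sum W (mlt_state W l' h' m x0 t') j)
  end.

End Defs.

(* Main.v *)
Require Import Defs.
From HB Require Import structures.
From mathcomp Require Import all_boot all_order all_algebra.
From mathcomp Require Import all_classical all_reals all_analysis.
From mathcomp Require Import ring lra.
Import Order.TTheory GRing.Theory Num.Theory.
Local Open Scope ring_scope.

Lemma alpha_gt0 (R : realType) (n : nat) (W : 'M[R]_n) :
  (exists i j, 0 < W i j) -> 0 < mean_weight W.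
Proof.
move=> [i [j Hij]].
have Hin : (i, j) \in edge_set W by rewrite inE.
rewrite /mean_weight divr_gt0 //.
  rewrite (bigD1 (i, j)) //= ltr_pwDl //.
  by apply: sumr_ge0 => p /andP[]; rewrite inE => /ltW.
rewrite ltr0n; apply/card_gt0P; by exists (i, j).
Qed.

Lemma in_sum_scale (R : realType) (n : nat) (W : 'M[R]_n) (k : R) (x y : 'I_n -> R) j :
  (forall i, x i = k * y i) -> in_sum W x j = k * in_sum W y j.
Proof.
move=> H; rewrite /in_sum mulr_sumr; apply: eq_bigr => i _.
by rewrite H mulrCA.
Qed.

Theorem theorem2 (R : realType) (n : nat) (W : 'M[R]_n) (thl thh : R)
    (h0 : 'I_n -> R) (x0 : 'I_n -> R) :
  (forall i j, 0 <= W i j) ->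
  (exists i j, 0 < W i j) ->
  0 < thl ->
  (forall j, 1 <= h0 j) ->
  (forall j, thl < thh * h0 j) ->
  let alpha := mean_weight W in
  let l := thr_low W thl (fun _ => 1) in
  let h := thr_high W thl thh h0 in
  gip_admissible l h x0 ->
  let x := gip_state W l h x0 in
  let x' := mlt_state W (fun _ => thl * alpha) (fun j => thh * alpha * h0 j)
              (fun j => thh * h0 j / thl) x0 in
  (forall (t : nat) (j : 'I_n), x t j = (thl * alpha) ^+ t * x' t j) /\
  (forall gamma : R, 0 <= gamma -> gamma < 1 ->
     let gamma' := 1 - (1 - gamma) * thl * alpha in
     forall j : 'I_n,
       (forall t : nat, (1 - gamma) ^+ t * x t j = (1 - gamma') ^+ t * x' t j) /\
       (cvgn (fun N => \sum_(1 <= t < N) (1 - gamma) ^+ t * x t j) \/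
        cvgn (fun N => \sum_(1 <= t < N) (1 - gamma') ^+ t * x' t j) ->
          cvgn (fun N => \sum_(1 <= t < N) (1 - gamma) ^+ t * x t j) /\
          cvgn (fun N => \sum_(1 <= t < N) (1 - gamma') ^+ t * x' t j) /\
          limn (fun N => \sum_(1 <= t < N) (1 - gamma) ^+ t * x t j) =
          limn (fun N => \sum_(1 <= t < N) (1 - gamma') ^+ t * x' t j))).
Proof.
move=> HW Hex Hthl Hh0 Hth alpha l h _ x x'.
have Ha : 0 < alpha by exact: alpha_gt0.
have Hc : 0 < thl * alpha by rewrite mulr_gt0.
have main : forall (t : nat) (j : 'I_n), x t j = (thl * alpha) ^+ t * x' t j.
  elim=> [|t IH] j; first by rewrite expr0 mul1r.
  rewrite /x /x' /=.
  rewrite -/(gip_state W l h x0 t) -/x.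
  set ms := mlt_state _ _ _ _ _ t.
  rewrite (@in_sum_scale _ _ W _ _ _ j IH).
  set y := in_sum W _ j.
  have Hct : 0 < (thl * alpha) ^+ t by rewrite exprn_gt0.
  rewrite /gip_f /mlt_g /l /h /thr_low /thr_high mulr1.
  have E1 : ((thl * alpha) ^+ t * y < (thl * alpha) ^+ t.+1) = (y < thl * alpha).
    by rewrite exprS [_ * (_ ^+ t)]mulrC ltr_pM2l.
  have Eh : thh * thl ^+ t * alpha ^+ t.+1 * h0 j =
            (thl * alpha) ^+ t * (thh * alpha * h0 j).
    rewrite [in RHS]exprMn exprS; set a := thl ^+ t; set b := alpha ^+ t; ring.
  rewrite E1 Eh ltr_pM2l //.
  case: ifP => _; first by rewrite mulr0.
  have Hd : thh * h0 j - thl != 0 by rewrite subr_eq0 gt_eqF.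
  have Ht : thl != 0 by rewrite gt_eqF.
  have Ha0 : alpha != 0 by rewrite gt_eqF.
  case: ifP => _.
    rewrite exprSr -mulrA; congr (_ * _).
    have -> : thh * alpha * h0 j - thl * alpha = alpha * (thh * h0 j - thl) by ring.
    by field; rewrite Hd Ht Ha0.
  rewrite exprSr -[in RHS]mulrA; congr (_ * _).
  by field.
split=> // gamma _ _ gamma' j.
have E : forall t, (1 - gamma) ^+ t * x t j = (1 - gamma') ^+ t * x' t j.
  move=> t; rewrite main /gamma' mulrA -exprMn; congr (_ ^+ _ * _); ring.
have EF : (fun N => \sum_(1 <= t < N) (1 - gamma) ^+ t * x t j) =
          (fun N => \sum_(1 <= t < N) (1 - gamma') ^+ t * x' t j).
  by apply: funext => N; apply: eq_bigr => t _; exact: E.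
split=> //; rewrite EF; by case.
Qed.
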